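(* Let $G$ be a graph, $\mathcal H$ a non-piercing family of subgraphs of $G$, and $(T,\{B_z\}_{z\in V(T)})$ a tree decomposition of $G$ with $T$ rooted. Let $\{x,y\}\in E(T)$ with $x$ a child of $y$, and let $A=A_{xy}=B_x\cap B_y$. Let $H,H'\in\mathcal H$ with $V(H)\cap A\ne\emptyset\ne V(H')\cap A$. Then: (i) if $H\cap A=H'\cap A$ and $H|_x\subsetneq H'|_x$, then $H'|_{-x}\subseteq H|_{-x}$; (ii) if $H\cap A=H'\cap A$ and $H|_x, H'|_x$ properly intersect, then $H|_{-x}=H'|_{-x}$; (iii) if $H\cap A\subsetneq H'\cap A$ and $H|_x,H'|_x$ properly intersect, then $H|_{-x}\subseteq H'|_{-x}$.
   Context: All graphs are finite and simple. A subgraph $H$ of a graph $G$ is identified with its vertex set $V(H)$ (subgraphs are taken to be induced). A family $\mathcal H$ of subgraphs of $G$ is non-piercing if every $H\in\mathcal H$ induces a connected subgraph of $G$ and, for all $H,H'\in\mathcal H$, the induced subgraph $G[V(H)\setminus V(H')]$ is connected (an empty vertex set is regarded as connected). For a node $x$ of the rooted tree $T$, $T_x$ is the subtree rooted at $x$, $G_x$ is the subgraph of $G$ induced on $\bigcup_{z\in V(T_x)}B_z$, and $G_{-x}$ is the subgraph induced on $V(G)\setminus V(G_x)$. For a subgraph $H$, $H|_x=V(H)\cap V(G_x)$ and $H|_{-x}=V(H)\cap V(G_{-x})$. Two sets $X,Y$ properly intersect if $X\setminus Y\ne\emptyset$ and $Y\setminus X\ne\emptyset$. *)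

(* Defs.v *)
From mathcomp Require Import all_boot.
Set Implicit Arguments. Unset Strict Implicit. Unset Printing Implicit Defensive.

Section Defs.

Definition simple_graph (V : finType) (e : rel V) : Prop :=
  symmetric e /\ irreflexive e.

(* The induced subgraph G[S] is connected (the empty set counts as connected). *)
Definition induced_rel (V : finType) (e : rel V) (S : {set V}) : rel V :=
  [rel a b | [&& e a b, a \in S & b \in S]].

Definition connected_in (V : finType) (e : rel V) (S : {set V}) : Prop :=
  forall u v, u \in S -> v \in S -> connect (induced_rel e S) u v.

Definition acyclic (T : finType) (t : rel T) : Prop :=
  forall c : seq T, uniq c -> 3 <= size c -> ~~ cycle t c.

(* A (finite) tree: a connected acyclic simple graph (nonempty since rooted below). *)
Definition is_tree (T : finType) (t : rel T) : Prop :=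
  simple_graph t /\ connected_in t [set: T] /\ acyclic t.

Definition tree_decomposition (V T : finType) (e : rel V) (t : rel T)
    (B : T -> {set V}) : Prop :=
  [/\ is_tree t,
      (forall v : V, exists z : T, v \in B z),
      (forall u v : V, e u v -> exists z : T, (u \in B z) && (v \in B z))
    & (forall v : V, connected_in t [set z | v \in B z])].

Definition del_edge (T : finType) (t : rel T) (x y : T) : rel T :=
  [rel a b | t a b && ~~ (((a == x) && (b == y)) || ((a == y) && (b == x)))].

Definition child_of (T : finType) (t : rel T) (r x y : T) : Prop :=
  t x y /\ ~~ connect (del_edge t x y) x r.

(* Node set of the subtree T_x rooted at x (x a child of y): the component of
   x in T minus the edge {x,y}, i.e. x and all its descendants. *)
Definition subtree (T : finType) (t : rel T) (x y : T) : {set T} :=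
  [set z | connect (del_edge t x y) x z].

Definition Gx (V T : finType) (t : rel T) (B : T -> {set V}) (x y : T) : {set V} :=
  \bigcup_(z in subtree t x y) B z.

Definition Gmx (V T : finType) (t : rel T) (B : T -> {set V}) (x y : T) : {set V} :=
  ~: Gx t B x y.

Definition non_piercing (V : finType) (e : rel V) (calH : {set {set V}}) : Prop :=
  (forall H, H \in calH -> connected_in e H) /\
  (forall H H', H \in calH -> H' \in calH -> connected_in e (H :\: H')).

Definition properly_intersect (V : finType) (X Y : {set V}) : bool :=
  (X :\: Y != set0) && (Y :\: X != set0).

End Defs.

(* Main.v *)
Require Import Defs.
From mathcomp Require Import all_boot.
Set Implicit Arguments. Unset Strict Implicit.

Lemma cross (T : finType) (r : rel T) (P : pred T) u v :
  connect r u v -> P u -> ~~ P v -> exists a b, [/\ r a b, P a & ~~ P b].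
Proof.
move/connectP=> [p]; elim: p u => [|w p IH] u /=.
  by move=> _ -> Pu; rewrite Pu.
move=> /andP[ruw pw] ev Pu nPv.
case Pw: (P w); first exact: (IH w pw ev Pw nPv).
by exists u, w; rewrite ruw Pu Pw.
Qed.

Lemma sep (V T : finType) (e : rel V) (t : rel T) (B : T -> {set V}) x y a b :
  tree_decomposition e t B -> e a b -> a \in Gx t B x y -> b \notin Gx t B x y ->
  a \in B x :&: B y.
Proof.
case=> _ _ Hedge Hcon eab aG bG.
have [z /andP[az bz]] := Hedge a b eab.
move: aG => /bigcupP [z' z'S az'].
have zS : z \notin subtree t x y.
  apply/negP=> zS; move/negP: bG; apply; apply/bigcupP; by exists z.
have := Hcon a z' z; rewrite !inE => /(_ az' az) hc.
have [c [d [cd cS dS]]] := cross (P := mem (subtree t x y)) hc z'S zS.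
move: cd => /= /and3P[tcd ac ad]; rewrite !inE in ac ad.
move: cS dS; rewrite !inE => cS dS.
case E: (((c == x) && (d == y)) || ((c == y) && (d == x))).
  by case/orP: E => /andP[/eqP ? /eqP ?]; subst; rewrite ?inE ac ad.
case/negP: dS; apply: connect_trans cS _; apply: connect1.
by rewrite /del_edge /= tcd E.
Qed.

Lemma keyL (V T : finType) (e : rel V) (t : rel T) (B : T -> {set V}) x y X u v :
  tree_decomposition e t B -> connected_in e X -> u \in X -> v \in X ->
  u \in Gx t B x y -> v \notin Gx t B x y ->
  exists a, (a \in X) && (a \in B x :&: B y).
Proof.
move=> TD cX uX vX uG vG.
have [a [b [ab aG bG]]] := cross (P := mem (Gx t B x y)) (cX u v uX vX) uG vG.
move: ab => /= /and3P[eab aX bX].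
by exists a; rewrite aX (sep TD eab aG bG).
Qed.

Theorem mainTheorem8 (V T : finType) (e : rel V) (t : rel T) (B : T -> {set V})
    (r : T) (calH : {set {set V}}) (x y : T) (H H' : {set V}) :
  simple_graph e ->
  non_piercing e calH ->
  tree_decomposition e t B ->
  child_of t r x y ->
  H \in calH -> H' \in calH ->
  H :&: (B x :&: B y) != set0 ->
  H' :&: (B x :&: B y) != set0 ->
  let A := B x :&: B y in
  let Hx := H :&: Gx t B x y in
  let H'x := H' :&: Gx t B x y in
  let Hmx := H :&: Gmx t B x y in
  let H'mx := H' :&: Gmx t B x y in
  [/\ (H :&: A = H' :&: A -> Hx \proper H'x -> H'mx \subset Hmx),
      (H :&: A = H' :&: A -> properly_intersect Hx H'x -> Hmx = H'mx)
    & (H :&: A \proper H' :&: A -> properly_intersect Hx H'x -> Hmx \subset H'mx)].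
Proof.
move=> _ [_ NP] TD _ HH HH' _ _ A Hx H'x Hmx H'mx.
have gen : forall K K', K \in calH -> K' \in calH ->
    forall w v, w \in K :\: K' -> w \in Gx t B x y -> v \in K :\: K' ->
      v \notin Gx t B x y -> exists a, (a \in K :\: K') && (a \in A).
  move=> K K' HK HK' w v wK wG vK vG.
  exact: (keyL TD (NP K K' HK HK') wK vK wG vG).
have inA : forall K K' a, K :&: A = K' :&: A -> a \in K -> a \in A -> a \in K'.
  move=> K K' a E aK aA.
  have : a \in K :&: A by rewrite inE aK aA.
  by rewrite E => /setIP[].
split.
- move=> E /properP [sub [w wH'x wHx]] .
  apply/subsetP=> v; rewrite /H'mx /Hmx /Gmx !inE => /andP[vH' vG].
  rewrite vG andbT; apply/negPn/negP=> vH.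
  move: wH'x wHx; rewrite /H'x /Hx !inE => /andP[wH' wG]; rewrite wG andbT => wH.
  have [a /andP[]] := gen H' H HH' HH w v ltac:(by rewrite inE wH wH')
    wG ltac:(by rewrite inE vH vH') vG.
  rewrite inE => /andP[aH aH'] aA.
  by rewrite (inA H' H a (esym E) aH' aA) in aH.
- move=> E /andP[/set0Pn[w1 w1P] /set0Pn[w2 w2P]].
  move: w1P w2P; rewrite /Hx /H'x !inE => /andP[w1n /andP[w1H w1G]] /andP[w2n /andP[w2H' w2G]].
  have w1H' : w1 \notin H' by move: w1n; rewrite w1G andbT.
  have w2H : w2 \notin H by move: w2n; rewrite w2G andbT.
  apply/setP=> v; rewrite /Hmx /H'mx /Gmx !inE.
  case vG: (v \in Gx t B x y); rewrite ?andbF // !andbT.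
  apply/idP/idP=> vK; apply/negPn/negP=> vK'.
  + have [a /andP[]] := gen H H' HH HH' w1 v ltac:(by rewrite inE w1H w1H')
      w1G ltac:(by rewrite inE vK vK') (negbT vG).
    rewrite inE => /andP[aH' aH] aA.
    by rewrite (inA H H' a E aH aA) in aH'.
  + have [a /andP[]] := gen H' H HH' HH w2 v ltac:(by rewrite inE w2H w2H')
      w2G ltac:(by rewrite inE vK vK') (negbT vG).
    rewrite inE => /andP[aH aH'] aA.
    by rewrite (inA H' H a (esym E) aH' aA) in aH.
- move=> /properP[sub _] /andP[/set0Pn[w1 w1P] _].
  move: w1P; rewrite /Hx /H'x !inE => /andP[w1n /andP[w1H w1G]].
  have w1H' : w1 \notin H' by move: w1n; rewrite w1G andbT.
  apply/subsetP=> v; rewrite /Hmx /H'mx /Gmx !inE => /andP[vH vG].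
  rewrite vG andbT; apply/negPn/negP=> vH'.
  have [a /andP[]] := gen H H' HH HH' w1 v ltac:(by rewrite inE w1H w1H')
    w1G ltac:(by rewrite inE vH vH') vG.
  rewrite inE => /andP[aH' aH] aA.
  have : a \in H' :&: A by apply: (subsetP sub); rewrite inE aH aA.
  by rewrite inE (negbTE aH').
Qed.
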